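(* Let $\mathcal{G}$ be a Kripke structure (viewed as a one-agent concurrent game structure) and let $\forall\pi_1.\cdots\forall\pi_n.\mathbf{E}.\varphi$ be an $\texttt{AHLTL}$ formula, with $\varphi$ quantifier-free over path variables $\pi_1,\dots,\pi_n$. Consider the statements (1) $\mathcal{G}_{\mathit{stut}}\models[\langle\langle\{\mathit{sched}\}\rangle\rangle\pi_1.\cdots\langle\langle\{\mathit{sched}\}\rangle\rangle\pi_n.]\,\big(\varphi\wedge\bigwedge_{i=1}^n\mathit{fair}_{\pi_i}\big)$, where $\mathit{fair}_{\pi_i}:=\square\lozenge\neg\mathit{stut}_{\pi_i}$; (2) $\mathcal{G}\models_{\texttt{AHLTL}}\forall\pi_1.\cdots\forall\pi_n.\mathbf{E}.\varphi$. Then (1) implies (2). If moreover $\varphi$ is an admissible formula, then (1) and (2) are equivalent.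
   Context: A multi-stage concurrent game structure (MSCGS) is a tuple $\mathcal{G}=(S,s_0,\Xi,\mathscr{M},\delta,d,\mathbf{AP},\ell)$ with finite state set $S$, initial state $s_0$, finite agent set $\Xi$, finite move set $\mathscr{M}$, transition function $\delta:S\times(\Xi\to\mathscr{M})\to S$, stage function $d:\Xi\to\mathbb{N}$, atomic propositions $\mathbf{AP}$, labelling $\ell:S\to2^{\mathbf{AP}}$. A Kripke structure $(S,s_0,\to,\mathbf{AP},\ell)$ is viewed as the MSCGS with a single agent (stage $0$) whose moves choose the $\to$-successor; its paths are the sequences $s_0s_1\cdots$ with $s_i\to s_{i+1}$. Stutter version: for an MSCGS $\mathcal{G}$ and a fresh agent $\mathit{sched}\notin\Xi$, $\mathcal{G}_{\mathit{stut}}=(S\times\{0,1\},(s_0,0),\Xi\uplus\{\mathit{sched}\},\mathscr{M}\times\{0,1\},\delta',d',\mathbf{AP}\uplus\{\mathit{stut}\},\ell')$ where $\delta'((s,b),\sigma)=(\delta(s,\mathit{proj}_1\circ\sigma_{\mid\Xi}),0)$ if $(\mathit{proj}_2\circ\sigma)(\mathit{sched})=0$ and $\delta'((s,b),\sigma)=(s,1)$ if $(\mathit{proj}_2\circ\sigma)(\mathit{sched})=1$; $\ell'((s,0))=\ell(s)$, $\ell'((s,1))=\ell(s)\cup\{\mathit{stut}\}$; $d'(\xi)=d(\xi)$ for $\xi\in\Xi$ and $d'(\mathit{sched})=m+1$ with $m$ the maximal value of $d$. $\texttt{HyperATL}^*$ semantics of a quantifier block on an MSCGS, evaluated from the empty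 assignment: a strategy for agent $\xi$ in copy $j$ maps a finite history in $(S^n)^+$ (states of all $n$ copies) together with the moves already fixed for all agents of stage $<d(\xi)$ in all $n$ copies to a move. An outcome is $u\in(S^n)^\omega$ with $u(0)=(s_0,\dots,s_0)$ such that for every $i$ there are global move vectors $\sigma_1,\dots,\sigma_n$ with $u(i+1)_j=\delta(u(i)_j,\sigma_j)$ and $\sigma_j(\xi)$ given by the strategy of $\xi$ in copy $j$ for every controlled agent $\xi$. The block $[\langle\langle A_1\rangle\rangle\pi_1.\cdots\langle\langle A_n\rangle\rangle\pi_n.]\psi$ holds iff there exist strategies for all controlled agents such that every outcome $(t_1,\dots,t_n)$ satisfies $\psi$ under $\pi_j\mapsto t_j$, where quantifier-free $\psi$ is evaluated as synchronous LTL with $a_{\pi}$ meaning $a$ holds in the current state of the path bound to $\pi$. $\texttt{AHLTL}$ semantics: $\mathcal{G}\models_{\texttt{AHLTL}}\forall\pi_1.\cdots\forall\pi_n.\mathbf{E}.\varphi$ iff for all paths $t_1,\dots,t_n$ of $\mathcal{G}$ there is a fair trajectory such that the stuttered paths satisfy $\varphi$. A trajectory is a sequence $\tau\in(2^{\{\pi_1,\dots,\pi_n\}})^\omega$ (the set of paths that progress at each step); it is fair if every $\pi_i$ belongs to $\tau(m)$ for infinitely many $m$. With $p_i(m)=|\{m'<m\mid\pi_i\in\tau(m')\}|$, the stuttered path for $\pi_i$ is $t_i(p_i(0))t_i(p_i(1))\cdots$, and $\varphi$ is evaluated synchronously (as LTL over indexed propositions) on the stuttered paths. An admissible formula is a conjunction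 of formulas of the form $\square\bigwedge_{a\in P}(a_{\pi_i}\leftrightarrow a_{\pi_j})$ ($P$ a set of atomic propositions) and of stutter-invariant LTL formulas over a single path variable (formulas whose truth value is unchanged when passing to a stutter-equivalent trace). *)

(* Defs.v *)
From mathcomp Require Import all_boot.
Set Implicit Arguments. Unset Strict Implicit. Unset Printing Implicit Defensive.

Inductive hform (AP : Type) (n : nat) : Type :=
| HTrue
| HAtom of AP & 'I_n
| HNot of hform AP n
| HAnd of hform AP n & hform AP n
| HNext of hform AP n
| HUntil of hform AP n & hform AP n.
Arguments HTrue {AP n}.

Definition HOr AP n (f g : hform AP n) := HNot (HAnd (HNot f) (HNot g)).
Definition HIff AP n (f g : hform AP n) := HOr (HAnd f g) (HAnd (HNot f) (HNot g)).
Definition HEv AP n (f : hform AP n) := HUntil HTrue f.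
Definition HGlob AP n (f : hform AP n) := HNot (HEv (HNot f)).
Definition hbigand AP n (s : seq (hform AP n)) := foldr (@HAnd AP n) HTrue s.

(* synchronous evaluation; w i k = label of the k-th state of the path bound to pi_i *)
Fixpoint hsat AP n (w : 'I_n -> nat -> AP -> bool) (k : nat) (f : hform AP n) : Prop :=
  match f with
  | HTrue => True
  | HAtom a i => w i k a = true
  | HNot g => ~ hsat w k g
  | HAnd g h => hsat w k g /\ hsat w k h
  | HNext g => hsat w k.+1 g
  | HUntil g h => exists m, k <= m /\ hsat w m h /\ (forall j, k <= j < m -> hsat w j g)
  end.

Fixpoint hmap AP AP' n (g : AP -> AP') (f : hform AP n) : hform AP' n :=
  match f with
  | HTrue => HTrue
  | HAtom a i => HAtom (g a) i
  | HNot f1 => HNot (hmap g f1)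
  | HAnd f1 f2 => HAnd (hmap g f1) (hmap g f2)
  | HNext f1 => HNext (hmap g f1)
  | HUntil f1 f2 => HUntil (hmap g f1) (hmap g f2)
  end.

Fixpoint only_var AP n (i : 'I_n) (f : hform AP n) : bool :=
  match f with
  | HTrue => true
  | HAtom _ j => j == i
  | HNot f1 | HNext f1 => only_var i f1
  | HAnd f1 f2 | HUntil f1 f2 => only_var i f1 && only_var i f2
  end.

Definition stutter_equiv AP (w w' : nat -> AP -> bool) : Prop :=
  exists f g : nat -> nat,
    f 0 = 0 /\ g 0 = 0 /\ (forall k, f k < f k.+1) /\ (forall k, g k < g k.+1) /\
    forall k x y, f k <= x < f k.+1 -> g k <= y < g k.+1 -> w x =1 w' y.

Definition stutter_invariant AP n (i : 'I_n) (f : hform AP n) : Prop :=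
  forall w w' : 'I_n -> nat -> AP -> bool,
    stutter_equiv (w i) (w' i) -> (hsat w 0 f <-> hsat w' 0 f).

Inductive admissible AP n : hform AP n -> Prop :=
| adm_eq (i j : 'I_n) (P : seq AP) :
    admissible (HGlob (hbigand [seq HIff (HAtom a i) (HAtom a j) | a <- P]))
| adm_si (i : 'I_n) (f : hform AP n) :
    only_var i f -> stutter_invariant i f -> admissible f
| adm_and (f g : hform AP n) : admissible f -> admissible g -> admissible (HAnd f g).

Record mscgs := MSCGS {
  St : finType;
  s_init : St;
  Ag : finType;
  Mv : finType;
  delta : St -> (Ag -> Mv) -> St;
  stage : Ag -> nat;
  APt : Type;
  lab : St -> APt -> bool }.

(* A strategy for agent xi (in some copy): finite history (S^n)^+ and the
   move vectors of all copies; it must only depend on the moves of agents of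
   stage < stage xi. *)
Definition strat_fun (G : mscgs) (n : nat) :=
  seq ('I_n -> St G) -> ('I_n -> Ag G -> Mv G) -> Mv G.

Definition stage_respecting (G : mscgs) (n : nat) (xi : Ag G) (f : strat_fun G n) :=
  forall h (s s' : 'I_n -> Ag G -> Mv G),
    (forall j xi', @stage G xi' < @stage G xi -> s j xi' = s' j xi') -> f h s = f h s'.

Definition history (G : mscgs) n (u : nat -> 'I_n -> St G) (i : nat) :=
  [seq u k | k <- iota 0 i.+1].

Definition is_outcome (G : mscgs) n (A : 'I_n -> pred (Ag G))
    (str : 'I_n -> Ag G -> strat_fun G n) (u : nat -> 'I_n -> St G) : Prop :=
  (forall j, u 0 j = s_init G) /\
  forall i, exists s : 'I_n -> Ag G -> Mv G,
    (forall j, u i.+1 j = delta (u i j) (s j)) /\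
    (forall j xi, A j xi -> s j xi = str j xi (history u i) s).

(* G |= [<<A_1>>pi_1 ... <<A_n>>pi_n.] psi  (from the empty assignment) *)
Definition hyperatl_block (G : mscgs) n (A : 'I_n -> pred (Ag G)) (psi : hform (APt G) n) : Prop :=
  exists str : 'I_n -> Ag G -> strat_fun G n,
    (forall j xi, stage_respecting xi (str j xi)) /\
    forall u, is_outcome A str u -> hsat (fun j k => lab (u k j)) 0 psi.

(* stutter version; None is the fresh agent sched / the fresh proposition stut;
   the bit false = 0, true = 1 *)
Definition stut (G : mscgs) : mscgs :=
  {| St := (St G * bool)%type;
     s_init := (s_init G, false);
     Ag := option (Ag G);
     Mv := (Mv G * bool)%type;
     delta := fun sb s =>
       if (s None).2 then (sb.1, true)
       else (delta sb.1 (fun xi => (s (Some xi)).1), false);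
     stage := fun xi => if xi is Some x then stage x
                        else (\max_(x : Ag G) stage x).+1;
     APt := option (APt G);
     lab := fun sb a => if a is Some a' then lab sb.1 a' else sb.2 |}.

Record kripke := Kripke {
  KSt : finType;
  k_init : KSt;
  krel : rel KSt;
  KAP : Type;
  klab : KSt -> KAP -> bool }.

Definition serial (K : kripke) := forall s, exists t, @krel K s t.

Definition kripke_game (K : kripke) : mscgs :=
  {| St := KSt K; s_init := k_init K; Ag := unit; Mv := KSt K;
     delta := fun s m => if @krel K s (m tt) then m tt else odflt s [pick t | @krel K s t];
     stage := fun _ => 0; APt := KAP K; lab := @klab K |}.

Definition kpath (K : kripke) (t : nat -> KSt K) :=
  t 0 = k_init K /\ forall k, @krel K (t k) (t k.+1).

(* trajectories: tau m i = pi_i progresses at step m *)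
Definition fair_traj n (tau : nat -> 'I_n -> bool) :=
  forall i N, exists m, N <= m /\ tau m i.

Definition progress n (tau : nat -> 'I_n -> bool) (i : 'I_n) (m : nat) :=
  count (fun m' => tau m' i) (iota 0 m).

Definition ahltl_sat (K : kripke) n (phi : hform (KAP K) n) : Prop :=
  forall t : 'I_n -> nat -> KSt K, (forall i, kpath (t i)) ->
    exists tau, fair_traj tau /\
      hsat (fun i m => @klab K (t i (progress tau i m))) 0 phi.

Definition fairf AP n : hform (option AP) n :=
  hbigand [seq HGlob (HEv (HNot (HAtom None i))) | i <- enum 'I_n].

(* Main.v *)
From Stdlib Require Import Classical ClassicalEpsilon FunctionalExtensionality.
Require Import Defs.
From mathcomp Require Import all_boot zify.
Set Implicit Arguments. Unset Strict Implicit. Unset Printing Implicit Defensive.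

Lemma hsat_ext AP n (w w' : 'I_n -> nat -> AP -> bool) (f : hform AP n) :
  (forall i k a, w i k a = w' i k a) -> forall k, hsat w k f <-> hsat w' k f.
Proof.
move=> H; elim: f => [|a i|f IH|f IHf g IHg|f IH|f IHf g IHg] k /=.
- by [].
- by rewrite H.
- by rewrite IH.
- by rewrite IHf IHg.
- by rewrite IH.
- split=> -[m [km [h1 h2]]]; exists m; split=> //; split; try by [apply/IHg|apply/IHg].
  + by move=> j hj; apply/IHf; apply: h2.
  + by move=> j hj; apply/IHf; apply: h2.
Qed.

Lemma hsat_hmap AP AP' n (g : AP -> AP') (w : 'I_n -> nat -> AP' -> bool) (f : hform AP n) k :
  hsat w k (hmap g f) <-> hsat (fun i k a => w i k (g a)) k f.
Proof.
elim: f k => [|a i|f IH|f IHf h IHh|f IH|f IHf h IHh] k /=.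
- by [].
- by [].
- by rewrite IH.
- by rewrite IHf IHh.
- by rewrite IH.
- split=> -[m [km [h1 h2]]]; exists m; split=> //; split; try by [apply/IHh|apply/IHh].
  + by move=> j hj; apply/IHf; apply: h2.
  + by move=> j hj; apply/IHf; apply: h2.
Qed.

Lemma hsat_ev AP n (w : 'I_n -> nat -> AP -> bool) f k :
  hsat w k (HEv f) <-> exists m, k <= m /\ hsat w m f.
Proof.
split=> [[m [km [h _]]]|[m [km h]]]; first by exists m.
by exists m.
Qed.

Lemma hsat_glob AP n (w : 'I_n -> nat -> AP -> bool) f k :
  hsat w k (HGlob f) <-> forall m, k <= m -> hsat w m f.
Proof.
change (~ hsat w k (HEv (HNot f)) <-> (forall m, k <= m -> hsat w m f)); rewrite hsat_ev; split.
- move=> H m km; apply: NNPP => Hn; apply: H; exists m; split => //.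
- by move=> H [m [km Hn]]; apply: Hn; apply: H.
Qed.

Lemma hsat_bigand AP n (w : 'I_n -> nat -> AP -> bool) (s : seq (hform AP n)) k :
  hsat w k (hbigand s) <-> forall f, List.In f s -> hsat w k f.
Proof.
elim: s => [|f s IH] /=; first by split.
rewrite IH; split.
- by move=> [h1 h2] g [<-|hg] //; apply: h2.
- by move=> H; split; [apply: H; left|move=> g hg; apply: H; right].
Qed.

Lemma hsat_iff AP n (w : 'I_n -> nat -> AP -> bool) f g k :
  hsat w k (HIff f g) <-> (hsat w k f <-> hsat w k g).
Proof.
rewrite /HIff /HOr /=; split.
- move=> H; split=> hf; apply: NNPP => hg; apply: H; split => -[]; tauto.
- move=> H [H1 H2]; tauto.
Qed.

Lemma hsat_eqP AP n (w : 'I_n -> nat -> AP -> bool) (i j : 'I_n) (P : seq AP) :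
  hsat w 0 (HGlob (hbigand [seq HIff (HAtom a i) (HAtom a j) | a <- P]))
  <-> forall m a, List.In a P -> w i m a = w j m a.
Proof.
rewrite hsat_glob; split.
- move=> H m a ha; have := H m isT; rewrite hsat_bigand => H'.
  have := H' (HIff (HAtom a i) (HAtom a j)).
  rewrite hsat_iff /=; case: (w i m a); case: (w j m a) => //= HH.
  + by have := (HH (List.in_map _ _ _ ha)).1 erefl.
  + by have := (HH (List.in_map _ _ _ ha)).2 erefl.
- move=> H m _; rewrite hsat_bigand => g /List.in_map_iff [a [<- ha]].
  by rewrite hsat_iff /= H.
Qed.

Lemma In_map_mem (T : eqType) U (f : T -> U) (s : seq T) x :
  x \in s -> List.In (f x) (map f s).
Proof.
elim: s => [|y s IH] //=; rewrite in_cons => /orP [/eqP ->|h]; [left|right] => //.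
exact: IH.
Qed.

Lemma hsat_fairf AP n (w : 'I_n -> nat -> option AP -> bool) :
  hsat w 0 (fairf AP n) <-> forall i N, exists m, N <= m /\ w i m None = false.
Proof.
rewrite /fairf hsat_bigand; split.
- move=> H i N; have := H (HGlob (HEv (HNot (HAtom None i)))).
  move=> /(_ (In_map_mem (fun i => HGlob (HEv (HNot (HAtom None i)))) (mem_enum _ i))).
  rewrite hsat_glob => /(_ N isT); rewrite hsat_ev => -[m [Nm /= hm]].
  by exists m; split => //; apply/negbTE/negP.
- move=> H g /List.in_map_iff [i [<- _]]; rewrite hsat_glob => N _.
  rewrite hsat_ev; have [m [Nm hm]] := H i N; exists m; split => //=.
  by rewrite hm.
Qed.

Definition eqs AP n (E : 'I_n -> 'I_n -> AP -> Prop) (w : 'I_n -> nat -> AP -> bool) :=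
  forall i j a m, E i j a -> w i m a = w j m a.

Lemma adm_decomp AP n (phi : hform AP n) : admissible phi ->
  exists (E : 'I_n -> 'I_n -> AP -> Prop) (SI : ('I_n -> nat -> AP -> bool) -> Prop),
    (forall w w', (forall i, stutter_equiv (w i) (w' i)) -> SI w -> SI w') /\
    (forall w, hsat w 0 phi <-> eqs E w /\ SI w).
Proof.
elim=> [i j P|i f _ hsi|f g _ [E1 [S1 [c1 h1]]] _ [E2 [S2 [c2 h2]]]].
- exists (fun i' j' a => i' = i /\ j' = j /\ List.In a P), (fun _ => True); split => // w.
  rewrite hsat_eqP /eqs; split.
  + by move=> H; split => // i' j' a m [-> [-> ha]]; apply: H.
  + by move=> [H _] m a ha; apply: H.
- exists (fun _ _ _ => False), (fun w => hsat w 0 f); split.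
  + by move=> w w' hw; apply: (hsi w w' (hw i)).1.
  + by move=> w; split => [h|[]//]; split.
- exists (fun i j a => E1 i j a \/ E2 i j a), (fun w => S1 w /\ S2 w); split.
  + by move=> w w' hw [s1 s2]; split; [apply: (c1 w)|apply: (c2 w)].
  + move=> w /=; rewrite h1 h2 /eqs; split.
    * move=> [[e1 s1] [e2 s2]]; split => // i j a m [] ?; [exact: e1|exact: e2].
    * move=> [e [s1 s2]]; split; split => // i j a m ?; apply: e; tauto.
Qed.

Definition ustep (s : nat -> nat) := forall x, s x <= s x.+1 <= (s x).+1.

Lemma ustep_mono s : ustep s -> forall x y, x <= y -> s x <= s y.
Proof.
move=> hs x y /subnK <-; elim: (y - x) => [|d IH] //.
by rewrite addSn; apply: leq_trans IH _; case/andP: (hs (d + x)).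
Qed.

Lemma ustep_ivt s : ustep s -> forall a b v, a <= b -> s a <= v <= s b ->
  exists x, a <= x <= b /\ s x = v.
Proof.
move=> hs a b v ab; elim: b ab => [|b IH] ab.
  rewrite leqn0 in ab; move/eqP: ab => ->; rewrite -eqn_leq => /eqP <-; by exists 0.
case/andP => h1 h2.
rewrite leq_eqVlt in ab; case/orP: ab => [/eqP eab|ab].
  by exists b.+1; rewrite eab leqnn; split => //; move: h1 h2; rewrite eab; lia.
case: (ltnP (s b) v) => hv.
- have e : s b.+1 = v by case/andP: (hs b); lia.
  by exists b.+1; rewrite leqnn; split => //; lia.
- have [x [hx1 hx2]] := IH ab ltac:(by rewrite h1 hv).
  by exists x; split => //; lia.
Qed.

Lemma ustep_hit s : ustep s -> s 0 = 0 -> (forall N, exists x, N <= s x) ->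
  forall k, exists x, s x == k.
Proof.
move=> hs h0 hu k; have [x hx] := hu k.
have [y [_ hy]] := ustep_ivt hs (leq0n x) (v := k) ltac:(rewrite h0; lia).
by exists y; apply/eqP.
Qed.

Lemma stutter_ustep AP (f : nat -> AP -> bool) s s' :
  ustep s -> s 0 = 0 -> (forall N, exists x, N <= s x) ->
  ustep s' -> s' 0 = 0 -> (forall N, exists x, N <= s' x) ->
  stutter_equiv (fun x => f (s x)) (fun y => f (s' y)).
Proof.
move=> hs h0 hu hs' h0' hu'.
pose F k := ex_minn (ustep_hit hs h0 hu k).
pose F' k := ex_minn (ustep_hit hs' h0' hu' k).
have key : forall s (hs : ustep s) (h0 : s 0 = 0) hu k x,
    ex_minn (ustep_hit hs h0 hu k) <= x < ex_minn (ustep_hit hs h0 hu k.+1) -> s x = k.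
  move=> t ht ht0 htu k x.
  case: ex_minnP => m1 /eqP hm1 min1; case: ex_minnP => m2 /eqP hm2 min2 /andP [l1 l2].
  have ge : k <= t x by rewrite -hm1; apply: ustep_mono.
  case: (ltnP k (t x)) => // lt; last by apply/eqP; rewrite eqn_leq ge lt.
  have [y [hy1 hy2]] := ustep_ivt ht (leq0n x) (v := k.+1) ltac:(rewrite ht0; lia).
  have := min2 y (introT eqP hy2); lia.
have F0 : forall s (hs : ustep s) (h0 : s 0 = 0) hu, ex_minn (ustep_hit hs h0 hu 0) = 0.
  move=> t ht ht0 htu; case: ex_minnP => m _ /(_ 0); rewrite ht0 => /(_ isT); lia.
have Fi : forall s (hs : ustep s) (h0 : s 0 = 0) hu k,
    ex_minn (ustep_hit hs h0 hu k) < ex_minn (ustep_hit hs h0 hu k.+1).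
  move=> t ht ht0 htu k.
  case: ex_minnP => m1 /eqP hm1 min1; case: ex_minnP => m2 /eqP hm2 min2.
  rewrite ltnNge; apply/negP => le.
  have := ustep_mono ht le; lia.
exists F, F'; split; first exact: F0.
split; first exact: F0.
split; first exact: Fi.
split; first exact: Fi.
by move=> k x y hx hy a /=; rewrite (key _ _ _ _ _ _ hx) (key _ _ _ _ _ _ hy).
Qed.


Lemma last_map_iota T (f : nat -> T) x0 m : last x0 (map f (iota 0 m.+1)) = f m.
Proof.
by rewrite -addn1 iotaD map_cat /= last_cat.
Qed.

Lemma part1 (K : kripke) (n : nat) (phi : hform (KAP K) n) :
  hyperatl_block (G := stut (kripke_game K)) (fun _ xi => xi == None)
      (HAnd (hmap Some phi) (fairf (KAP K) n)) -> ahltl_sat phi.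
Proof.
move=> [str [hstage hout]] t ht.
pose toS (cb : 'I_n -> nat * bool) : 'I_n -> KSt K * bool :=
  fun j => (t j (cb j).1, (cb j).2).
pose s0 (c : 'I_n -> nat * bool) : 'I_n -> option unit -> KSt K * bool :=
  fun j _ => (t j (c j).1.+1, false).
pose cb0 : 'I_n -> nat * bool := fun _ => (0, false).
pose bitf (g : seq ('I_n -> nat * bool)) j := (str j None (map toS g) (s0 (last cb0 g))).2.
pose step (g : seq ('I_n -> nat * bool)) : 'I_n -> nat * bool :=
  fun j => ((if bitf g j then (last cb0 g j).1 else (last cb0 g j).1.+1), bitf g j).
pose gen := fix gen m := if m is m'.+1 then rcons (gen m') (step (gen m')) else [:: cb0].
pose CB m := last cb0 (gen m).
have gen_eq : forall m, gen m = map CB (iota 0 m.+1).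
  elim=> [|m IH] //.
  rewrite -(addn1 m.+1) iotaD map_cat -IH /=.
  by rewrite cats1 add0n /CB /= last_rcons.
pose u : nat -> 'I_n -> St (stut (kripke_game K)) := fun m => toS (CB m).
have hist : forall m, history (G := stut (kripke_game K)) u m = map toS (gen m).
  by move=> m; rewrite /history gen_eq -map_comp.
have CBS : forall m, CB m.+1 = step (gen m) by move=> m; rewrite /CB /= last_rcons.
pose beta m j := bitf (gen m) j.
pose tau m j := ~~ beta m j.
have prog : forall j m, progress tau j m = (CB m j).1.
  move=> j; elim=> [|m IH] //.
  rewrite CBS /progress -addn1 iotaD count_cat -/(progress tau j m) IH /= /step /tau.
  rewrite -/(CB m) /beta; case: (bitf (gen m) j) => /=; lia.
have isout : is_outcome (G := stut (kripke_game K)) (fun _ xi => xi == None) str u.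
  split; first by move=> j; rewrite /u /toS /CB /= (ht j).1.
  move=> i.
  exists (fun j xi => if xi is Some _ then s0 (CB i) j xi
                      else str j None (history u i) (s0 (CB i))).
  split.
  - move=> j /=; rewrite /u CBS /step /toS -/(CB i) /bitf -hist -/(CB i).
    case: (str j None (history u i) (s0 (CB i))).2 => //=.
    by rewrite (ht j).2.
  - move=> j [xi|] //= _; apply: hstage => j' [x|] //=.
    by rewrite ltnn.
have := hout u isout => -[hphi hfair].
exists tau; split.
- move=> i N; move/hsat_fairf: hfair => /(_ i N.+1) [m [Nm hm]].
  exists m.-1; split; first lia.
  move: hm; rewrite /= /u /toS /=; case: m Nm => [|m] //= _.
  by rewrite CBS /step /= /tau /beta => ->.
- move/hsat_hmap: hphi => hphi.
  eapply hsat_ext; last exact: hphi.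
  by move=> i k a /=; rewrite prog.
Qed.


Lemma progress0 n (b : nat -> 'I_n -> bool) k : progress b k 0 = 0.
Proof. by []. Qed.

Lemma progressS n (b : nat -> 'I_n -> bool) k m :
  progress b k m.+1 = progress b k m + b m k.
Proof. by rewrite /progress -addn1 iotaD count_cat /= addn0. Qed.

Lemma progress_ustep n (b : nat -> 'I_n -> bool) k : ustep (progress b k).
Proof. by move=> m; rewrite progressS; case: (b m k); rewrite ?addn0 ?addn1 leqnn ?leqnSn. Qed.

Lemma progress_unb n (b : nat -> 'I_n -> bool) k :
  (forall N, exists m, N <= m /\ b m k) -> forall N, exists m, N <= progress b k m.
Proof.
move=> H; elim=> [|N [m hm]]; first by exists 0.
have [m' [mm' hb]] := H m; exists m'.+1; rewrite progressS hb.
have := ustep_mono (progress_ustep b k) mm'; lia.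
Qed.

Definition kdelta (K : kripke) (x m : KSt K) : KSt K :=
  if @krel K x m then m else odflt x [pick y | @krel K x y].

Lemma kdelta_rel K x m : serial K -> @krel K x (@kdelta K x m).
Proof.
move=> hs; rewrite /kdelta; case: ifP => // _.
case: pickP => [y //|h]; have [y hy] := hs x; by have := h y; rewrite hy.
Qed.

Definition validc (K : kripke) n (E : 'I_n -> 'I_n -> KAP K -> Prop) (c : 'I_n -> KSt K) :=
  forall i j a, E i j a -> @klab K (c i) a = @klab K (c j) a.

Definition step_ok (K : kripke) n (E : 'I_n -> 'I_n -> KAP K -> Prop)
    (cur nx : 'I_n -> KSt K) (S : 'I_n -> bool) :=
  validc E (fun k => if S k then nx k else cur k).

Definition sys (K : kripke) n (E : 'I_n -> 'I_n -> KAP K -> Prop)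
    (cur prop : nat -> 'I_n -> KSt K) (b : nat -> 'I_n -> bool) :=
  [/\ (forall k, cur 0 k = k_init K),
      (forall m k, @krel K (cur m k) (prop m k)),
      (forall m k, cur m.+1 k = if b m k then prop m k else cur m k) &
      (forall m k, b m k = true <-> exists S, step_ok E (cur m) (prop m) S /\ S k = true)].

Lemma union_ok K n (E : 'I_n -> 'I_n -> KAP K -> Prop) (cur nx : 'I_n -> KSt K)
    (B : 'I_n -> bool) :
  validc E cur ->
  (forall k, B k = true <-> exists S, step_ok E cur nx S /\ S k = true) ->
  step_ok E cur nx B.
Proof.
move=> hv hB i j a e /=.
case Bi: (B i); case Bj: (B j).
- have [S1 [h1 S1i]] := (hB i).1 Bi; have [S2 [h2 S2j]] := (hB j).1 Bj.
  have := h1 i j a e; have := h2 i j a e; rewrite /= S1i S2j.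
  case S1j: (S1 j); first by move=> _ ->.
  case S2i: (S2 i); first by move=> <-.
  by move=> h2e h1e; rewrite -h2e h1e (hv i j a e).
- have [S1 [h1 S1i]] := (hB i).1 Bi.
  have := h1 i j a e; rewrite /= S1i.
  by case S1j: (S1 j) => //; have := (hB j).2 (ex_intro _ S1 (conj h1 S1j)); rewrite Bj.
- have [S2 [h2 S2j]] := (hB j).1 Bj.
  have := h2 i j a e; rewrite /= S2j.
  by case S2i: (S2 i) => //; have := (hB i).2 (ex_intro _ S2 (conj h2 S2i)); rewrite Bi.
- exact: hv.
Qed.

Lemma sys_valid K n E cur prop b : @sys K n E cur prop b -> forall m, validc E (cur m).
Proof.
case=> h0 hR hS hB; elim=> [|m IH].
  by move=> i j a _; rewrite !h0.
have := union_ok IH (hB m) => h i j a e.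
by rewrite !hS; apply: h.
Qed.

Definition run K n (E : 'I_n -> 'I_n -> KAP K -> Prop) (t : 'I_n -> nat -> KSt K)
    (c : 'I_n -> nat) (r : nat -> 'I_n -> nat) :=
  [/\ (forall k, r 0 k = c k), (forall k, ustep (fun l => r l k)),
      (forall k N, exists l, N <= r l k) &
      (forall l, validc E (fun k => t k (r l k)))].

Lemma helper (f g : nat -> bool) (rp rq : nat -> nat) cp cq dp dq l :
  ustep rp -> ustep rq -> rp 0 = cp -> rq 0 = cq -> cq <= dq -> dp <= cp.+1 ->
  (forall l, f (rp l) = g (rq l)) -> f dp = g dq -> rp l < dp -> dq < rq l ->
  f dp = g (rq l).
Proof.
move=> hp hq p0 q0 cqd dpc hfg hd lp lq.
have rpl : rp l = cp by have := ustep_mono hp (leq0n l); lia.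
have inter : forall v, cq <= v <= rq l -> g v = f cp.
  move=> v hv; have [l' [hl' hv']] := ustep_ivt hq (leq0n l) (v := v) ltac:(rewrite q0; exact: hv).
  have : rp l' = cp.
    have := ustep_mono hp (leq0n l'); have := ustep_mono hp (proj2 (andP hl')); lia.
  by move=> e; rewrite -hv' -e hfg.
rewrite hd inter ?inter //; lia.
Qed.

Lemma maxnr m n : m <= n -> maxn m n = n. Proof. by move/maxn_idPr. Qed.
Lemma maxnl m n : n <= m -> maxn m n = m. Proof. by move/maxn_idPl. Qed.

Lemma max_valid K n (E : 'I_n -> 'I_n -> KAP K -> Prop) t c r (d : 'I_n -> nat) l :
  run E t c r -> (forall k, c k <= d k <= (c k).+1) ->
  validc E (fun k => t k (d k)) ->
  validc E (fun k => t k (maxn (r l k) (d k))).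
Proof.
case=> r0 rs _ rv hd vd i j a e /=.
have hfg : forall l, klab (t i (r l i)) a = klab (t j (r l j)) a by move=> l'; exact: rv.
have hdd := vd i j a e; rewrite /= in hdd.
case: (ltnP (r l i) (d i)) => li; case: (ltnP (r l j) (d j)) => lj.
- by [].
-   rewrite leq_eqVlt in lj; case/orP: lj => [/eqP ej|lj]; first by rewrite -ej.
  have := hd i; have := hd j => /andP [hj1 hj2] /andP [hi1 hi2].
  exact: (helper (f := fun x => klab (t i x) a) (g := fun x => klab (t j x) a)
    (rs i) (rs j) (r0 i) (r0 j) hj1 hi2 hfg hdd li lj).
-   rewrite leq_eqVlt in li; case/orP: li => [/eqP ei|li]; first by rewrite -ei.
  have := hd i; have := hd j => /andP [hj1 hj2] /andP [hi1 hi2].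
  symmetry.
  exact: (helper (f := fun x => klab (t j x) a) (g := fun x => klab (t i x) a)
    (rs j) (rs i) (r0 j) (r0 i) hi1 hj2 (fun l => esym (hfg l)) (esym hdd) lj li).
- exact: hfg.
Qed.

Definition consistent K n (cur : nat -> 'I_n -> KSt K) (b : nat -> 'I_n -> bool)
    (t : 'I_n -> nat -> KSt K) m :=
  forall m' k, m' <= m -> t k (progress b k m') = cur m' k.

Lemma inv_all K n E cur prop b : @sys K n E cur prop b ->
  (forall t, (forall i, kpath (t i)) -> exists r, run E t (fun _ => 0) r) ->
  forall m t, (forall i, kpath (t i)) -> consistent cur b t m ->
    exists r, run E t (fun k => progress b k m) r.
Proof.
move=> hsys H2; elim=> [|m IH] t ht hc; first exact: H2.
have [r [r0 rs rf rv]] := IH t ht (fun m' k h => hc m' k (leqW h)).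
exists (fun l k => maxn (r l k) (progress b k m.+1)); split.
- by move=> k; rewrite r0 maxnr // progressS leq_addr.
- move=> k l /=; have := rs k l; lia.
- move=> k N; have [l hl] := rf k N; exists l; lia.
- move=> l; apply: (@max_valid K n E t (fun k => progress b k m) r (fun k => progress b k m.+1) l); first by split.
    by move=> k; rewrite progressS; case: (b m k); rewrite ?addn0 ?addn1 leqnn ?leqnSn.
  move=> i j a e /=; rewrite !hc //; exact: (sys_valid hsys).
Qed.


Definition tm n (b : nat -> 'I_n -> bool) k x : nat :=
  match excluded_middle_informative (exists m, progress b k m = x) with
  | left H => proj1_sig (constructive_indefinite_description _ H)
  | right _ => 0 end.

Lemma tm_spec n (b : nat -> 'I_n -> bool) k x :
  (exists m, progress b k m = x) -> progress b k (tm b k x) = x.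
Proof.
rewrite /tm => H; case: excluded_middle_informative => // H'.
by case: constructive_indefinite_description.
Qed.

Definition act K n (cur : nat -> 'I_n -> KSt K) (b : nat -> 'I_n -> bool) k x :=
  cur (tm b k x) k.

Lemma cur_same K n E cur prop b k m1 m2 : @sys K n E cur prop b ->
  progress b k m1 = progress b k m2 -> cur m1 k = cur m2 k.
Proof.
case=> _ _ hS _.
have gen : forall m1 d, progress b k (m1 + d) = progress b k m1 -> cur (m1 + d) k = cur m1 k.
  move=> m0; elim=> [|d IH]; first by rewrite addn0.
  rewrite addnS progressS => e.
  have mono := ustep_mono (progress_ustep b k) (leq_addr d m0).
  have bf : b (m0 + d) k = false by move: e mono; case: (b (m0 + d) k) => /=; lia.
  by rewrite hS bf IH //; move: e; rewrite bf; lia.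
case: (leqP m1 m2) => h e.
- by rewrite -(subnKC h) gen // subnKC.
- by rewrite -(subnKC (ltnW h)) gen // subnKC // ltnW.
Qed.

Lemma act_spec K n E cur prop b k m x : @sys K n E cur prop b ->
  progress b k m = x -> act cur b k x = cur m k.
Proof.
move=> hs e; rewrite /act; apply: (cur_same hs).
by rewrite tm_spec ?e //; exists m.
Qed.

Lemma act_rel K n E cur prop b k m x : @sys K n E cur prop b ->
  x < progress b k m -> @krel K (act cur b k x) (act cur b k x.+1).
Proof.
move=> hs hx.
have ex : exists m, x < progress b k m by exists m.
case: (ex_minnP ex) => m' hm' hmin.
case: m' hm' hmin => [|m'] hm' hmin; first by rewrite progress0 in hm'.
have le : progress b k m' <= x.
  by rewrite leqNgt; apply/negP => /hmin; lia.
move: hm'; rewrite progressS.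
case bm: (b m' k) => /= hm'; last lia.
rewrite (act_spec (m := m') hs); last lia.
rewrite (act_spec (m := m'.+1) hs); last by rewrite progressS bm; lia.
by case: hs => _ hR hS _; rewrite hS bm.
Qed.

Lemma fair_all K n E cur prop b : serial K -> @sys K n E cur prop b ->
  (forall m t, (forall i, kpath (t i)) -> consistent cur b t m ->
     exists r, run E t (fun k => progress b k m) r) ->
  forall k N, exists m, N <= m /\ b m k.
Proof.
move=> hser hs Inv; have hs' := hs; case: hs' => h0 hR hS hB.
apply: NNPP => Hn.
pose J k := exists N, forall m, N <= m -> b m k = false.
have [k0 Jk0] : exists k0, J k0.
  apply: NNPP => H; apply: Hn => k N; apply: NNPP => H'; apply: H; exists k; exists N.
  move=> m Nm; apply: negbTE; apply/negP => bm; apply: H'; exists m; split => //.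
pose Jb k := if excluded_middle_informative (J k) then true else false.
have JbP : forall k, Jb k = true <-> J k.
  by move=> k; rewrite /Jb; case: excluded_middle_informative.
pose Nf k := match excluded_middle_informative (J k) with
             | left H => proj1_sig (constructive_indefinite_description _ H)
             | right _ => 0 end.
have hNf : forall k, J k -> forall m, Nf k <= m -> b m k = false.
  move=> k Jk; rewrite /Nf; case: excluded_middle_informative => // H.
  by case: constructive_indefinite_description.
pose T := \max_(k : 'I_n) Nf k.
have stuck : forall k m, J k -> T <= m -> b m k = false.
  move=> k m Jk Tm; apply: hNf => //; apply: leq_trans Tm; exact: leq_bigmax.
have notJ : forall k, ~ J k -> forall N, exists m, N <= m /\ b m k.
  move=> k nJ N; apply: NNPP => H; apply: nJ; exists N => m Nm.
  apply: negbTE; apply/negP => bm; apply: H; exists m; split => //.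
pose p k := progress b k T.
have prog_stuck : forall k m, J k -> T <= m -> progress b k m = p k.
  move=> k m Jk; elim: m => [|m IH] Tm.
    by rewrite /p; rewrite leqn0 in Tm; move/eqP: Tm => ->.
  rewrite leq_eqVlt in Tm; case/orP: Tm => [/eqP <-//|Tm].
  by rewrite progressS stuck // addn0 IH.
have cur_stuck : forall k m, J k -> T <= m -> cur m k = cur T k.
  by move=> k m Jk Tm; apply: (cur_same hs); rewrite prog_stuck.
have pmono : forall k m1 m2, m1 <= m2 -> progress b k m1 <= progress b k m2.
  by move=> k m1 m2; apply: ustep_mono; exact: progress_ustep.
have unb : forall k, ~ J k -> forall x, p k <= x -> exists m, T <= m /\ progress b k m = x.
  move=> k nJ x px; have [m2 hm2] := progress_unb (notJ k nJ) x.
  have := pmono k m2 (maxn T m2) (leq_maxr _ _) => h2.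
  have [m [hm1 hm]] := ustep_ivt (progress_ustep b k) (leq_maxl T m2) (v := x)
     ltac:(rewrite px /=; lia).
  by exists m; split => //; case/andP: hm1.
pose f := fun y : KSt K => kdelta y y.
pose C k x := if Jb k && (p k < x) then iter (x - (p k).+1) f (prop T k)
              else act cur b k x.
have CnJ : forall k x, ~ J k -> C k x = act cur b k x.
  move=> k x nJ; rewrite /C; case: (Jb k) (JbP k) => //= -[h _].
  by case: nJ; apply: h.
have Cle : forall k x, x <= p k -> C k x = act cur b k x.
  by move=> k x h; rewrite /C; case: (Jb k) => //=; rewrite ltnNge h.
have kpC : forall k, kpath (C k).
  move=> k; split.
    rewrite Cle // (act_spec (m := 0) hs) //; exact: h0.
  move=> x; case: (boolP (Jb k)) => jk.
  - have Jk := (JbP k).1 jk.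
    case: (ltngtP x (p k)) => hx.
    + rewrite !Cle //; last exact: ltnW.
      exact: (act_rel (m := T) hs).
    + rewrite /C jk /= hx (ltn_trans hx (ltnSn x)).
      have -> : x.+1 - (p k).+1 = (x - (p k).+1).+1 by lia.
      rewrite iterS; exact: kdelta_rel.
    + rewrite hx Cle // /C jk /= ltnSn subnn /=.
      by rewrite (act_spec (m := T) hs) //.
  - have nJ : ~ J k by move=> Jk; move: jk; rewrite (proj2 (JbP k) Jk).
    rewrite !CnJ //; have [m hm] := progress_unb (notJ k nJ) x.+1.
    exact: (act_rel (m := m) hs).
have consT : consistent cur b C T.
  move=> m' k hm'; rewrite Cle; last exact: pmono.
  exact: (act_spec hs).
have [r [r0 rs rf rv]] := Inv T C kpC consT.
have rge : forall l k, p k <= r l k.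
  move=> l k; rewrite /p -r0; exact: (ustep_mono (rs k) (leq0n l)).
have [lk0 hlk0] := rf k0 (p k0).+1.
have fm : exists l1, (forall j, J j -> r l1 j = p j) /\ exists j, J j /\ r l1.+1 j <> p j.
  suff : forall l, (exists j, J j /\ r l j <> p j) ->
      exists l1, (forall j, J j -> r l1 j = p j) /\ exists j, J j /\ r l1.+1 j <> p j.
    by move=> H; apply: (H lk0); exists k0; split => //; lia.
  elim=> [|l IH] [j [Jj hj]]; first by case: hj; rewrite r0.
  case: (classic (forall j, J j -> r l j = p j)) => H; first by exists l; split => //; exists j.
  apply: IH; apply: NNPP => H'; apply: H => j' Jj'; apply: NNPP => H''; apply: H'.
  by exists j'.
have [l1 [hl1 [j0 [Jj0 hj0]]]] := fm.
pose S j := Jb j && (r l1.+1 j != p j).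
suff ok : step_ok E (cur T) (prop T) S.
  have SJ0 : S j0 = true by rewrite /S (proj2 (JbP j0) Jj0) /=; apply/eqP.
  by have := (hB T j0).2 (ex_intro _ S (conj ok SJ0)); rewrite stuck.
have V1 : forall k, J k -> (if S k then prop T k else cur T k) = C k (r l1.+1 k).
  move=> k Jk; have jk := proj2 (JbP k) Jk.
  have rl := hl1 k Jk; have := rs k l1; rewrite /= rl => /andP [rr1 rr2].
  rewrite /S jk /=; case: eqP => [->|ne].
  - by rewrite Cle // (act_spec (m := T) hs).
  - have -> : r l1.+1 k = (p k).+1 by lia.
    by rewrite /C jk /= ltnSn subnn.
have V2 : forall k, ~ J k -> S k = false.
  move=> k nJ; rewrite /S; case: (Jb k) (JbP k) => //= -[h _]; by case: nJ; apply: h.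
have Const : forall i j a, (forall m, klab (cur m i) a = klab (cur m j) a) -> ~ J i -> J j ->
    forall x, p i <= x -> klab (C i x) a = klab (cur T j) a.
  move=> i j a hv nJ Jj x px; rewrite CnJ //.
  have [m [Tm hm]] := unb i nJ x px.
  by rewrite (act_spec hs hm) hv cur_stuck.
have CT : forall k, ~ J k -> C k (p k) = cur T k.
  by move=> k nJ; rewrite CnJ // (act_spec (m := T) hs).
move=> i j a e /=.
have hv := fun m => @sys_valid _ _ _ _ _ _ hs m i j a e.
have rvl := rv l1.+1 i j a e; rewrite /= in rvl.
case: (classic (J i)) => Ji; case: (classic (J j)) => Jj.
- by rewrite (V1 i Ji) (V1 j Jj).
- rewrite (V1 i Ji) (V2 j Jj) rvl.
  rewrite (Const j i a (fun m => esym (hv m)) Jj Ji _ (rge _ _)).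
  by rewrite -(CT j Jj) (Const j i a (fun m => esym (hv m)) Jj Ji _ (leqnn _)).
- rewrite (V1 j Jj) (V2 i Ji) -rvl.
  rewrite (Const i j a hv Ji Jj _ (rge _ _)).
  by rewrite -(CT i Ji) (Const i j a hv Ji Jj _ (leqnn _)).
- by rewrite (V2 i Ji) (V2 j Jj); apply: hv.
Qed.


Definition sbit K n (E : 'I_n -> 'I_n -> KAP K -> Prop) (h : seq ('I_n -> KSt K * bool))
    (mv : 'I_n -> KSt K) (j : 'I_n) : bool :=
  let cur := fun k => (last (fun _ => (k_init K, false)) h k).1 in
  let nx := fun k => kdelta (cur k) (mv k) in
  if excluded_middle_informative (exists S, step_ok E cur nx S /\ S j = true)
  then true else false.

Definition sstr K n (E : 'I_n -> 'I_n -> KAP K -> Prop) :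
    'I_n -> Ag (stut (kripke_game K)) -> strat_fun (stut (kripke_game K)) n :=
  fun j xi h s => if xi is None then (k_init K, ~~ sbit E h (fun k => (s k (Some tt)).1) j)
                  else (k_init K, false).

Lemma part2 (K : kripke) (n : nat) (phi : hform (KAP K) n) :
  serial K -> admissible phi -> ahltl_sat phi ->
  hyperatl_block (G := stut (kripke_game K)) (fun _ xi => xi == None)
      (HAnd (hmap Some phi) (fairf (KAP K) n)).
Proof.
move=> hser hadm hah.
have [E [SI [hSI hphi]]] := adm_decomp hadm.
exists (sstr E); split.
  move=> j [x|] h s s' hss //=.
  have -> : (fun k => (s k (Some tt)).1) = (fun k => (s' k (Some tt)).1).
    by apply: functional_extensionality => k; rewrite hss.
  by [].
move=> u [hu0 hus].
pose sv i := proj1_sig (constructive_indefinite_description _ (hus i)).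
have svP : forall i, (forall j, u i.+1 j = delta (u i j) (sv i j)) /\
    (forall j xi, xi == None -> sv i j xi = sstr E j xi (history u i) (sv i)).
  by move=> i; rewrite /sv; case: constructive_indefinite_description.
pose cur m k := (u m k).1.
pose prop m k := kdelta (cur m k) (sv m k (Some tt)).1.
pose b m k := sbit E (history u m) (fun k => (sv m k (Some tt)).1) k.
have hlast : forall m, last (fun _ => (k_init K, false)) (history u m) = u m.
  by move=> m; rewrite /history last_map_iota.
have ustep_eq : forall m k, u m.+1 k = if b m k then (prop m k, false) else (cur m k, true).
  move=> m k; have [h1 h2] := svP m; rewrite h1 /= (h2 k None isT) /=.
  by rewrite /b /prop /cur /kdelta; case: sbit.
have hsys : sys E cur prop b.
  split.
  - by move=> k; rewrite /cur hu0.
  - by move=> m k; apply: kdelta_rel.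
  - by move=> m k; rewrite /cur ustep_eq; case: (b m k).
  - move=> m k; rewrite /b /sbit hlast.
    by case: excluded_middle_informative.
have H2 : forall t, (forall i, kpath (t i)) -> exists r, run E t (fun _ => 0) r.
  move=> t ht; have [tau [ftau htau]] := hah t ht.
  have [heq _] := (hphi _).1 htau.
  exists (fun l k => progress tau k l); split.
  - by [].
  - by move=> k; apply: progress_ustep.
  - by move=> k; apply: progress_unb; apply: ftau.
  - by move=> l i j a e; apply: (heq i j a l e).
have hfair := fair_all hser hsys (inv_all hsys H2).
split.
- apply/hsat_hmap.
  have hw : hsat (fun (i : 'I_n) (k : nat) (a : KAP K) => @klab K (cur k i) a) 0 phi.
    apply/hphi; split.
      by move=> i j a m e; apply: (@sys_valid _ _ _ _ _ _ hsys m i j a e).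
    have kp : forall i, kpath (act cur b i).
      move=> i; split.
        by rewrite (act_spec hsys (progress0 b i)) /cur hu0.
      move=> x; have [m hm] := progress_unb (hfair i) x.+1.
      exact: (act_rel (m := m) hsys).
    have [tau [ftau htau]] := hah _ kp.
    have [_ hsi] := (hphi _).1 htau.
    apply: (hSI _ _ _ hsi) => i.
    have := stutter_ustep (fun x a => klab (act cur b i x) a)
      (progress_ustep tau i) (progress0 tau i) (progress_unb (ftau i))
      (progress_ustep b i) (progress0 b i) (progress_unb (hfair i)).
    suff -> : (fun y => (fun x a => klab (act cur b i x) a) (progress b i y)) =
              (fun k a => klab (cur k i) a) by [].
    apply: functional_extensionality => y; apply: functional_extensionality => a.
    by rewrite (act_spec (m := y) hsys).
  eapply hsat_ext; last exact: hw.
  by [].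
- apply/hsat_fairf => i N.
  have [m [Nm bm]] := hfair i N.
  exists m.+1; split; first lia.
  by rewrite /= ustep_eq bm.
Qed.

Theorem theorem7p1 (K : kripke) (n : nat) (phi : hform (KAP K) n) :
  serial K ->
  (hyperatl_block (G := stut (kripke_game K)) (fun _ xi => xi == None)
      (HAnd (hmap Some phi) (fairf (KAP K) n)) -> ahltl_sat phi) /\
  (admissible phi ->
     (hyperatl_block (G := stut (kripke_game K)) (fun _ xi => xi == None)
        (HAnd (hmap Some phi) (fairf (KAP K) n)) <-> ahltl_sat phi)).
Proof.
move=> hser; split; first exact: part1.
by move=> hadm; split; [exact: part1|exact: part2].
Qed.
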